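(* Let $q$ be a prime power and $n\ge1$. For $i=1,2$, let $\mathcal{C}_i$ be a $[2n,n,d_i]_q$ linear code with generator matrix $G_i=(I_n\ \ f_i(A_i))$, where $f_i(x)\in\mathbb{F}_q[x]$ and $A_i$ is an $n\times n$ Toeplitz matrix over $\mathbb{F}_q$. Then there exists a $[4n,2n,\min\{d_1,d_2\}]_q$ linear code which is formally self-dual with respect to the Euclidean inner product and (when $q$ is an even power of a prime) with respect to the Hermitian inner product.
   Context: A Toeplitz matrix is a square matrix whose diagonals parallel to the main diagonal each have constant entries. Euclidean inner product $\sum_i x_iy_i$; for $q=p^h$ with $h$ even, Hermitian inner product $\sum_i x_iy_i^{\sqrt q}$. A code is formally self-dual (FSD) with respect to an inner product if it has the same weight distribution as its dual code with respect to that inner product. *)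

(* Defs.v *)
From HB Require Import structures.
From mathcomp Require Import all_boot all_order all_algebra all_field.
Set Implicit Arguments. Unset Strict Implicit. Unset Printing Implicit Defensive.
Import GRing.Theory.
Local Open Scope ring_scope.

Definition wt (F : finFieldType) (m : nat) (x : 'rV[F]_m) : nat :=
  #|[set j : 'I_m | x 0 j != 0]|.

Definition genCode (F : finFieldType) (k m : nat) (G : 'M[F]_(k, m))
  : {set 'rV[F]_m} := [set u *m G | u : 'rV[F]_k].

Definition minDist (F : finFieldType) (m : nat) (C : {set 'rV[F]_m}) (d : nat) :=
  (exists2 c, c \in C & (c != 0) /\ wt c = d) /\
  (forall c, c \in C -> c != 0 -> (d <= wt c)%N).

Definition ipE (F : finFieldType) (m : nat) (x y : 'rV[F]_m) : F :=
  \sum_(j < m) x 0 j * y 0 j.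

(* Hermitian inner product with exponent r = sqrt q *)
Definition ipH (F : finFieldType) (r : nat) (m : nat) (x y : 'rV[F]_m) : F :=
  \sum_(j < m) x 0 j * (y 0 j) ^+ r.

Definition dualCode (F : finFieldType) (m : nat) (ip : 'rV[F]_m -> 'rV[F]_m -> F)
  (C : {set 'rV[F]_m}) : {set 'rV[F]_m} :=
  [set y | [forall x in C, ip x y == 0]].

Definition sameWD (F : finFieldType) (m : nat) (C D : {set 'rV[F]_m}) :=
  forall w : nat, #|[set c in C | wt c == w]| = #|[set c in D | wt c == w]|.

Definition formallySelfDual (F : finFieldType) (m : nat)
  (ip : 'rV[F]_m -> 'rV[F]_m -> F) (C : {set 'rV[F]_m}) :=
  sameWD C (dualCode ip C).

Definition toeplitz (F : finFieldType) (n : nat) (A : 'M[F]_n) :=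
  forall i j i' j' : 'I_n, (i + j' = i' + j)%N -> A i j = A i' j'.

Definition polyMx (F : finFieldType) (n : nat) (f : {poly F}) (A : 'M[F]_n) : 'M[F]_n :=
  \sum_(i < size f) f`_i *: A ^+ i.

(* Main.v *)
Require Import Defs.
From HB Require Import structures.
From mathcomp Require Import all_boot all_order all_algebra all_field all_fingroup.
From mathcomp Require Import zify.
Import GRing.Theory.
Local Open Scope ring_scope.

Section S.
Variable F : finFieldType.

Lemma wtE m (v : 'rV[F]_m) : wt v = (\sum_(j < m) (v ord0 j != 0%R : nat))%N.
Proof.
rewrite /wt -sum1_card big_mkcond /=; apply: eq_bigr => j _.
by rewrite inE; case: (v 0 j != 0).
Qed.

Lemma wt_row_mx m1 m2 (a : 'rV[F]_m1) (b : 'rV[F]_m2) :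
  wt (row_mx a b) = (wt a + wt b)%N.
Proof.
rewrite !wtE big_split_ord /=; congr (_ + _)%N; apply: eq_bigr => j _.
  by rewrite row_mxEl.
by rewrite row_mxEr.
Qed.

Lemma wt_opp m (v : 'rV[F]_m) : wt (- v) = wt v.
Proof. by rewrite !wtE; apply: eq_bigr => j _; rewrite mxE oppr_eq0. Qed.

Lemma wt0 m : wt (0 : 'rV[F]_m) = 0%N.
Proof. by rewrite wtE big1 // => j _; rewrite mxE eqxx. Qed.

Lemma wt_eq0 m (v : 'rV[F]_m) : (wt v == 0%N) = (v == 0).
Proof.
apply/idP/idP; last by move/eqP->; rewrite wt0.
rewrite wtE sum_nat_eq0 => /forallP H; apply/eqP/matrixP => i j.
rewrite ord1 mxE; apply/eqP; move: (H j) => /=; by case: (v _ j == 0).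
Qed.

Lemma wt_perm m (s : {perm 'I_m}) (v : 'rV[F]_m) : wt (v *m perm_mx s) = wt v.
Proof.
have -> : perm_mx s = perm_mx (s^-1)^-1 :> 'M[F]_m by rewrite invgK.
rewrite -col_permE /wt.
rewrite -(card_preimset [set j | v 0 j != 0] (@perm_inj _ s^-1)).
by apply: eq_card => j; rewrite !inE mxE.
Qed.


Lemma ipE_mx m (x y : 'rV[F]_m) : ipE x y = (x *m y^T) 0 0.
Proof. by rewrite /ipE mxE; apply: eq_bigr => j _; rewrite mxE. Qed.

Lemma genCodeP k m (G : 'M[F]_(k, m)) c : reflect (exists u, c = u *m G) (c \in genCode G).
Proof.
apply: (iffP imsetP) => [[u _ ->]|[u ->]]; by exists u.
Qed.
Arguments genCodeP {k m} G c.

Section Gen.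
Variables (k : nat) (M P : 'M[F]_k).
Hypotheses (hPt : P^T = P) (hPP : P *m P = 1%:M)
  (hPw : forall x : 'rV_k, wt (x *m P) = wt x) (hM : M^T = P *m M *m P).

Let G := row_mx (1%:M : 'M[F]_k) M.
Let Q := block_mx (0 : 'M[F]_k) (- P) P 0.

Lemma GQ : G *m Q = row_mx (M *m P) (- P).
Proof.
by rewrite /G /Q mul_row_block !mul1mx !mulmx0 add0r addr0.
Qed.

Lemma wtQ x : wt (x *m Q) = wt x.
Proof.
rewrite -[x]hsubmxK /Q mul_row_block !mulmx0 add0r addr0 !wt_row_mx.
by rewrite mulmxN wt_opp !hPw addnC.
Qed.

Lemma QQ (x : 'rV[F]_(k + k)) : x *m Q *m Q = - x.
Proof.
rewrite -mulmxA /Q mulmx_block !mulmx0 !mul0mx !add0r !addr0 mulmxN mulNmx hPP.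
by rewrite -[0 : 'M[F]_k]oppr0 -opp_block_mx -scalar_mx_block mulmxN mulmx1.
Qed.

Lemma dual_eq : dualCode (@ipE F (k + k)) (genCode G) = genCode (G *m Q).
Proof.
apply/setP => y; rewrite /dualCode inE; apply/forallP/(genCodeP (G *m Q) y).
- move=> H.
  have HG : G *m y^T = 0.
    apply/matrixP => i j; rewrite ord1 [RHS]mxE.
    move: (H ('e_i *m G)); rewrite (_ : 'e_i *m G \in genCode G); last by apply/genCodeP; exists 'e_i.
    by rewrite /= ipE_mx -mulmxA -rowE mxE => /eqP.
  rewrite -[y]hsubmxK in HG *.
  move: HG; rewrite /G tr_row_mx mul_row_col mul1mx => /eqP; rewrite addr_eq0 => /eqP H1.
  have Hy1 : lsubmx y = - (rsubmx y *m M^T).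
    by apply: trmx_inj; rewrite H1 raddfN /= trmx_mul trmxK.
  exists (- (rsubmx y *m P)); rewrite GQ mul_mx_row Hy1 hM.
  by rewrite !mulNmx !mulmxN opprK !mulmxA -(mulmxA _ P P) hPP mulmx1.
- move=> [v ->] x; apply/implyP => /genCodeP [u ->].
  rewrite ipE_mx GQ !trmx_mul !mulmxA -(mulmxA u) tr_row_mx mul_row_col mul1mx.
  rewrite raddfN /= trmx_mul hPt hM !mulmxA hPP mul1mx mulmxN addrN mulmx0 mul0mx.
  by rewrite mxE.
Qed.

Lemma fsd_gen : formallySelfDual (@ipE F (k + k)) (genCode G).
Proof.
move=> w; rewrite /formallySelfDual dual_eq.
have -> : [set c in genCode (G *m Q) | wt c == w] =
          (fun c => c *m Q) @: [set c in genCode G | wt c == w].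
  apply/setP => c; apply/idP/imsetP.
  - rewrite inE => /andP [/genCodeP [u ->] Hw]; exists (u *m G).
      by rewrite inE -wtQ -mulmxA Hw andbT; apply/genCodeP; exists u.
    by rewrite mulmxA.
  - move=> [c' Hc ->]; move: Hc; rewrite !inE => /andP [/genCodeP [u ->] Hw].
    by rewrite wtQ Hw andbT; apply/genCodeP; exists u; rewrite mulmxA.
rewrite card_imset // => a b /(congr1 (fun c => c *m Q)); rewrite !QQ.
by move/oppr_inj.
Qed.

End Gen.


Lemma herm_fsd m (r : nat) (C : {set 'rV[F]_m}) :
  (0 < r)%N -> injective (fun a : F => a ^+ r) ->
  formallySelfDual (@ipE F m) C -> formallySelfDual (@ipH F r m) C.
Proof.
move=> r0 rinj H w; rewrite H.
pose sg (v : 'rV[F]_m) := map_mx (fun a => a ^+ r) v.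
have sginj : injective sg.
  move=> a b /matrixP E; apply/matrixP => i j; apply: rinj; move: (E i j).
  by rewrite !mxE.
have wsg v : wt (sg v) = wt v.
  by rewrite !wtE; apply: eq_bigr => j _; rewrite mxE expf_eq0 r0.
rewrite -(card_preimset _ sginj); apply: eq_card => y; rewrite !inE wsg.
have ipHE x z : ipH r x z = ipE x (sg z).
  by rewrite /ipH /ipE; apply: eq_bigr => j _; rewrite /sg mxE.
congr (_ && _); apply/forallP/forallP => Hx x; move: (Hx x); by rewrite ipHE.
Qed.

Lemma frob_inj (p h : nat) : prime p -> #|F| = (p ^ h)%N ->
  injective (fun a : F => a ^+ (p ^ h./2)).
Proof.
move=> pp cF.
have pc : p \in [pchar F] by apply: card_finPcharP cF pp.
have hn : [pchar F].-nat (p ^ h./2)%N.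
  by rewrite (eq_pnat _ (pcharf_eq pc)) pnatX pnat_id.
move=> a b /= E.
have E2 : a ^+ (p ^ h./2) = (a - b) ^+ (p ^ h./2) + b ^+ (p ^ h./2).
  by rewrite -exprDn_pchar // subrK.
move: E2; rewrite E => /(congr1 (fun z => z - b ^+ (p ^ h./2))).
rewrite addrK subrr => /esym/eqP; rewrite expf_eq0 subr_eq0 => /andP [_ /eqP //].
Qed.


Section Toep.
Variable n : nat.
Let s : {perm 'I_n} := perm (@rev_ord_inj n).
Let J : 'M[F]_n := perm_mx s.

Lemma sV : s^-1%g = s.
Proof.
by apply/permP => j; apply: (@perm_inj _ s); rewrite permKV /s !permE rev_ordK.

Qed.

Lemma Jt : J^T = J.
Proof. by rewrite /J tr_perm_mx sV. Qed.

Lemma JJ : J *m J = 1%:M.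
Proof.
rewrite /J -perm_mxM (_ : (s * s)%g = 1%g) ?perm_mx1 //.
by apply/permP => j; rewrite permM !permE rev_ordK.
Qed.

Lemma wtJ (x : 'rV[F]_n) : wt (x *m J) = wt x.
Proof. exact: wt_perm. Qed.

Lemma toepT (A : 'M[F]_n) : toeplitz A -> A^T = J *m A *m J.
Proof.
move=> hA; rewrite /J -row_permE (_ : perm_mx s = perm_mx s^-1); last by rewrite sV.
rewrite -col_permE; apply/matrixP => i j; rewrite !mxE /s !permE.
apply: hA => /=; have := ltn_ord i; have := ltn_ord j; lia.
Qed.

Lemma expT (A : 'M[F]_n) (k : nat) : A^T = J *m A *m J -> (A ^+ k)^T = J *m A ^+ k *m J.
Proof.
move=> hA; elim: k => [|k IH].
  by rewrite !expr0 trmx1 mulmx1 JJ.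
rewrite exprSr -mulmxE trmx_mul IH hA.
rewrite !mulmxA -(mulmxA _ J J) JJ mulmx1 -!mulmxA; congr (J *m _); rewrite !mulmxA; congr (_ *m J).
by rewrite !mulmxE -exprS exprSr.
Qed.

Lemma polyT (f : {poly F}) (A : 'M[F]_n) : toeplitz A ->
  (polyMx f A)^T = J *m polyMx f A *m J.
Proof.
move=> /toepT hA; rewrite /polyMx raddf_sum mulmx_sumr mulmx_suml.
apply: eq_bigr => i _.
transitivity (f`_i *: (A ^+ i)^T); first by apply/matrixP => a b; rewrite !mxE.
by rewrite expT // -scalemxAr -scalemxAl.
Qed.

End Toep.


Lemma main_gen (n : nat) (f1 f2 : {poly F}) (A1 A2 : 'M[F]_n)
  (hA1 : toeplitz A1) (hA2 : toeplitz A2) (d1 d2 : nat)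
  (hd1 : minDist (genCode (row_mx 1%:M (polyMx f1 A1))) d1)
  (hd2 : minDist (genCode (row_mx 1%:M (polyMx f2 A2))) d2) :
  exists G : 'M[F]_(n + n, (n + n) + (n + n)),
    [/\ \rank G = (n + n)%N,
        minDist (genCode G) (minn d1 d2),
        formallySelfDual (@ipE F ((n + n) + (n + n))) (genCode G) &
        forall p h : nat, prime p -> #|F| = (p ^ h)%N -> ~~ odd h ->
          formallySelfDual (@ipH F (p ^ h./2) ((n + n) + (n + n))) (genCode G)].
Proof.
set J : 'M[F]_n := perm_mx (perm (@rev_ord_inj n)).
set B1 := polyMx f1 A1; set B2 := polyMx f2 A2.
set M := block_mx B1 0 0 B2.
set P := block_mx J 0 0 J.
have hPt : P^T = P by rewrite /P tr_block_mx !trmx0 Jt.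
have hPP : P *m P = 1%:M.
  by rewrite /P mulmx_block !mulmx0 !mul0mx !addr0 !add0r JJ -scalar_mx_block.
have hPw : forall x : 'rV_(n + n), wt (x *m P) = wt x.
  move=> x; rewrite -[x]hsubmxK /P mul_row_block !mulmx0 addr0 add0r !wt_row_mx.
  by rewrite !wtJ.
have hM : M^T = P *m M *m P.
  rewrite /M /P tr_block_mx !trmx0 /B1 /B2 !polyT //.
  by rewrite !mulmx_block !mulmx0 !mul0mx !addr0 !add0r !mul0mx.
have fsd := @fsd_gen _ M P hPt hPP hPw hM.
set G := row_mx 1%:M M.
exists G; split.
- apply/eqP; rewrite eqn_leq rank_leq_row /=.
  have := mxrankM_maxl G (col_mx 1%:M 0).
  by rewrite /G mul_row_col mulmx1 mulmx0 addr0 mxrank1.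
- have wtG u1 u2 : wt (row_mx u1 u2 *m G) =
      (wt (u1 *m row_mx 1%:M B1) + wt (u2 *m row_mx 1%:M B2))%N.
    rewrite /G /M mul_mx_row mulmx1 mul_row_block !mulmx0 addr0 add0r.
    by rewrite !mul_mx_row !mulmx1 !wt_row_mx addnACA.
  case: hd1 => [[c1 hc1 [nz1 w1]] lb1]; case: hd2 => [[c2 hc2 [nz2 w2]] lb2].
  split.
  + case: (leqP d1 d2) => h.
    * move/genCodeP: hc1 => [u1 Hu1].
      exists (row_mx u1 0 *m G); first by apply/genCodeP; exists (row_mx u1 0).
      have e : wt (row_mx u1 0 *m G) = d1.
        by rewrite wtG mul0mx wt0 addn0 -Hu1 w1.
      split; last by rewrite e.
      by rewrite -wt_eq0 e -w1 wt_eq0.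
    * move/genCodeP: hc2 => [u2 Hu2].
      exists (row_mx 0 u2 *m G); first by apply/genCodeP; exists (row_mx 0 u2).
      have e : wt (row_mx 0 u2 *m G) = d2.
        by rewrite wtG mul0mx wt0 add0n -Hu2 w2.
      split; last by rewrite e.
      by rewrite -wt_eq0 e -w2 wt_eq0.
  + move=> c /genCodeP [u ->] nz.
    rewrite -[u]hsubmxK in nz *; rewrite wtG.
    have [e1|e1] := eqVneq (lsubmx u *m row_mx 1%:M B1) 0.
      have [e2|e2] := eqVneq (rsubmx u *m row_mx 1%:M B2) 0.
        by move: nz; rewrite -wt_eq0 wtG e1 e2 wt0.
      apply: leq_trans (geq_minr _ _) _; apply: leq_trans (leq_addl _ _).
      by apply: lb2 => //; apply/genCodeP; exists (rsubmx u).
    apply: leq_trans (geq_minl _ _) _; apply: leq_trans (leq_addr _ _).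
    by apply: lb1 => //; apply/genCodeP; exists (lsubmx u).
- exact: fsd.
- move=> p h pp cF _; apply: herm_fsd; first by rewrite expn_gt0 prime_gt0.
    exact: frob_inj cF.
  exact: fsd.
Qed.

End S.

Theorem theorem4 (F : finFieldType) (n : nat) (hn : (1 <= n)%N)
  (f1 f2 : {poly F}) (A1 A2 : 'M[F]_n)
  (hA1 : toeplitz A1) (hA2 : toeplitz A2) (d1 d2 : nat)
  (hd1 : minDist (genCode (row_mx 1%:M (polyMx f1 A1))) d1)
  (hd2 : minDist (genCode (row_mx 1%:M (polyMx f2 A2))) d2) :
  exists G : 'M[F]_(2 * n, 4 * n),
    [/\ \rank G = (2 * n)%N,
        minDist (genCode G) (minn d1 d2),
        formallySelfDual (@ipE F (4 * n)) (genCode G) &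
        forall p h : nat, prime p -> #|F| = (p ^ h)%N -> ~~ odd h ->
          formallySelfDual (@ipH F (p ^ h./2) (4 * n)) (genCode G)].
Proof.
rewrite (_ : (4 * n)%N = ((n + n) + (n + n))%N); last by lia.
rewrite (_ : (2 * n)%N = (n + n)%N); last by lia.
have H := (@main_gen F n f1 f2 A1 A2 hA1 hA2 d1 d2 hd1 hd2).
case: H => G [h1 h2 h3 h4]; exists G; split.
- exact h1.
- exact h2.
- exact h3.
- exact h4.
Qed.
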